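(* The symmetrized bidisc $\mathbb{G}=\{(z_1+z_2,z_1z_2):z_1,z_2\in\mathbb{D}\}$ is biholomorphic to the domain $\mathcal{D}_1=\{(z_1,z_2)\in\mathbb{C}^2: 1+|z_1|^2-|z_2|^2>|1+z_1^2-z_2^2|,\ \mathrm{Im}(z_1(1+\overline{z_2}))>0\}$.
   Context: $\mathbb{D}$ denotes the open unit disc in $\mathbb{C}$. *)

(* Defs.v *)
From Stdlib Require Import Reals.
From Coquelicot Require Import Coquelicot.
Open Scope C_scope.

Definition C2 : NormedModule C_AbsRing :=
  prod_NormedModule C_AbsRing C_NormedModule C_NormedModule.

Definition disc (z : C) : Prop := (Cmod z < 1)%R.

(* Complex (Frechet) differentiability: the derivative is C-linear. *)
Definition holomorphic_on (U : C2 -> Prop) (f : C2 -> C2) : Prop :=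
  forall x : C2, U x -> exists l : C2 -> C2, filterdiff f (locally x) l.

Definition biholomorphic (U V : C2 -> Prop) : Prop :=
  exists (f g : C2 -> C2),
    holomorphic_on U f /\ holomorphic_on V g /\
    (forall x, U x -> V (f x)) /\ (forall y, V y -> U (g y)) /\
    (forall x, U x -> g (f x) = x) /\ (forall y, V y -> f (g y) = y).

Definition symbidisc (p : C2) : Prop :=
  exists z1 z2 : C, disc z1 /\ disc z2 /\ p = (z1 + z2, z1 * z2).

Definition D1 (p : C2) : Prop :=
  let z1 := fst p in let z2 := snd p in
  (Cmod (1 + z1 * z1 - z2 * z2) < 1 + Cmod z1 ^ 2 - Cmod z2 ^ 2)%R /\
  (0 < Im (z1 * (1 + Cconj z2)))%R.

(* Main.v *)
Require Import Defs.
From Stdlib Require Import Reals Lra Psatz.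
From Coquelicot Require Import Coquelicot.
Open Scope C_scope.

Lemma Cmod_pos_ne (z : C) : z <> 0 -> (0 < Cmod z)%R.
Proof. intros H. apply Cmod_gt_0; auto. Qed.

Lemma is_derive_Cinv (z : C) : z <> 0 ->
  @is_derive C_AbsRing (AbsRing_NormedModule C_AbsRing) (fun y : C => / y) z (- / (z * z)).
Proof.
  intros Hz. unfold is_derive. split.
  { apply is_linear_scal_l. }
  intros x Hx. apply (@is_filter_lim_locally_unique _ (AbsRing_NormedModule C_AbsRing)) in Hx. subst x.
  intros eps.
  apply (@locally_norm_le_locally _ (AbsRing_NormedModule C_AbsRing)).
  assert (Hm : (0 < Cmod z)%R) by now apply Cmod_pos_ne.
  assert (Hd : (0 < Rmin (Cmod z / 2) (eps * Cmod z ^ 3 / 2))%R).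
  { apply Rmin_pos. lra. destruct eps as [e He]; simpl. 
    apply Rmult_lt_0_compat; [|lra]. apply Rmult_lt_0_compat; auto. simpl; repeat apply Rmult_lt_0_compat; lra. }
  exists (mkposreal _ Hd). intros y Hy. unfold ball_norm in Hy. simpl in Hy.
  change (norm (minus y z)) with (Cmod (y - z)) in Hy.
  change (norm (minus (minus (/ y) (/ z)) (scal (minus y z) (- / (z * z)))))
    with (Cmod ((/ y - / z) - (y - z) * (- / (z * z)))).
  change (norm (minus y z)) with (Cmod (y - z)).
  assert (Hy1 : (Cmod (y - z) < Cmod z / 2)%R) by (eapply Rlt_le_trans; [exact Hy| apply Rmin_l]).
  assert (Hy2 : (Cmod (y - z) < eps * Cmod z ^ 3 / 2)%R) by (eapply Rlt_le_trans; [exact Hy| apply Rmin_r]).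
  assert (Hyz : (Cmod z / 2 <= Cmod y)%R).
  { assert (H := Cmod_triangle y (z - y)). replace (y + (z - y)) with z in H by ring.
    replace (z - y) with (- (y - z)) in H by ring. rewrite Cmod_opp in H. lra. }
  assert (Hy0 : (y:C) <> 0%C).
  { intros ->. rewrite Cmod_0 in Hyz. lra. }
  replace ((/ y - / z) - (y - z) * (- / (z * z))) with ((y - z) * (y - z) / (y * (z * z))) by (field; auto).
  rewrite Cmod_div. 2:{ repeat apply Cmult_neq_0; auto. }
  rewrite !Cmod_mult.
  assert (H0 := Cmod_ge_0 (y - z)).
  apply (Rmult_le_reg_r (Cmod y * (Cmod z * Cmod z))).
  { apply Rmult_lt_0_compat; [lra|]. apply Rmult_lt_0_compat; lra. }
  unfold Rdiv. rewrite Rmult_assoc, Rinv_l. 2:{ apply Rgt_not_eq. apply Rmult_lt_0_compat; [lra|]. apply Rmult_lt_0_compat; lra. }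
  destruct eps as [e He]; simpl in *.
  rewrite Rmult_1_r.
  assert (Hk : (e * (Cmod z * (Cmod z * (Cmod z * 1))) / 2 <= e * (Cmod y * (Cmod z * Cmod z)))%R).
  { assert (0 <= Cmod z * Cmod z)%R by nra.
    assert (Cmod z / 2 * (Cmod z * Cmod z) <= Cmod y * (Cmod z * Cmod z))%R by nra. nra. }
  assert (Cmod (y - z) <= e * (Cmod y * (Cmod z * Cmod z)))%R by lra.
  replace (e * Cmod (y - z) * (Cmod y * (Cmod z * Cmod z)))%R with (Cmod (y - z) * (e * (Cmod y * (Cmod z * Cmod z))))%R by ring.
  apply Rmult_le_compat_l; auto.
Qed.

Lemma fd_to {U : NormedModule C_AbsRing} (f : U -> C) F l :
  @filterdiff C_AbsRing U (AbsRing_NormedModule C_AbsRing) f F l -> @filterdiff C_AbsRing U C_NormedModule f F l.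
Proof. intros [[Hp Hs Hn] Hd]. split. split. exact Hp. exact Hs. exact Hn. exact Hd. Qed.
Lemma fd_from {U : NormedModule C_AbsRing} (f : U -> C) F l :
  @filterdiff C_AbsRing U C_NormedModule f F l -> @filterdiff C_AbsRing U (AbsRing_NormedModule C_AbsRing) f F l.
Proof. intros [[Hp Hs Hn] Hd]. split. split. exact Hp. exact Hs. exact Hn. exact Hd. Qed.

Lemma Ccomm : forall n m : C_AbsRing, mult n m = mult m n.
Proof. intros; apply Cmult_comm. Qed.

Lemma fd_fst (x : C2) : @filterdiff C_AbsRing C2 (AbsRing_NormedModule C_AbsRing) (fun y : C2 => fst y) (locally x) (fun h : C2 => fst h).
Proof. apply fd_from. apply filterdiff_linear. apply is_linear_fst. Qed.

Lemma fd_snd (x : C2) : @filterdiff C_AbsRing C2 (AbsRing_NormedModule C_AbsRing) (fun y : C2 => snd y) (locally x) (fun h : C2 => snd h).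
Proof. apply fd_from. apply filterdiff_linear. apply is_linear_snd. Qed.

Lemma fd_affine (x : C2) (a b c : C) :
  @filterdiff C_AbsRing C2 (AbsRing_NormedModule C_AbsRing) (fun y : C2 => a + b * fst y + c * snd y) (locally x)
    (fun h : C2 => b * fst h + c * snd h).
Proof.
  assert (H : @filterdiff C_AbsRing C2 (AbsRing_NormedModule C_AbsRing)
     (fun y : C2 => plus (a : C_AbsRing) (plus (scal (b:C_AbsRing) (fst y : C_AbsRing)) (scal (c:C_AbsRing) (snd y : C_AbsRing))))
     (locally x)
     (fun y : C2 => plus (zero : C_AbsRing) (plus (scal (b:C_AbsRing) (fst y : C_AbsRing)) (scal (c:C_AbsRing) (snd y : C_AbsRing))))).
  { apply (@filterdiff_plus_fct C_AbsRing C2 (AbsRing_NormedModule C_AbsRing)). exact _.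
    apply (@filterdiff_const C_AbsRing C2 (AbsRing_NormedModule C_AbsRing)). exact _.
    apply (@filterdiff_plus_fct C_AbsRing C2 (AbsRing_NormedModule C_AbsRing)). exact _.
    apply (@filterdiff_scal_r_fct C_AbsRing C2 (AbsRing_NormedModule C_AbsRing)). exact _. apply Ccomm. apply fd_fst.
    apply (@filterdiff_scal_r_fct C_AbsRing C2 (AbsRing_NormedModule C_AbsRing)). exact _. apply Ccomm. apply fd_snd. }
  refine (@filterdiff_ext_lin C_AbsRing C2 (AbsRing_NormedModule C_AbsRing) (locally x) _ _ _ _
    (@filterdiff_ext C_AbsRing C2 (AbsRing_NormedModule C_AbsRing) (locally x) _ _ _ _ _ H) _).
  - intros y. change (a + (b * fst y + c * snd y) = a + b * fst y + c * snd y). ring.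
  - intros h. change (0 + (b * fst h + c * snd h) = b * fst h + c * snd h). ring.
Qed.

Lemma fd_rat (x : C2) (a b c d e f : C) : d + e * fst x + f * snd x <> 0 ->
  exists l, @filterdiff C_AbsRing C2 C_NormedModule
    (fun y : C2 => (a + b * fst y + c * snd y) / (d + e * fst y + f * snd y)) (locally x) l.
Proof.
  intros Hn. eexists. apply fd_to.
  apply (@filterdiff_mult_fct C_AbsRing C2). apply Ccomm. apply fd_affine.
  apply (@filterdiff_comp' C_AbsRing C2 (AbsRing_NormedModule C_AbsRing) (AbsRing_NormedModule C_AbsRing) (fun y : C2 => (d + e * fst y + f * snd y : C_AbsRing)) (fun z : C_AbsRing => / z) x (fun h : C2 => e * fst h + f * snd h) (fun y : C_AbsRing => scal y (- / ((d + e * fst x + f * snd x) * (d + e * fst x + f * snd x))))).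
  apply fd_affine. exact (is_derive_Cinv _ Hn).
Qed.

Lemma fd_pair (x : C2) (u v : C2 -> C) :
  (exists l, @filterdiff C_AbsRing C2 C_NormedModule u (locally x) l) ->
  (exists l, @filterdiff C_AbsRing C2 C_NormedModule v (locally x) l) ->
  exists l : C2 -> C2, filterdiff (fun y => (u y, v y) : C2) (locally x) l.
Proof.
  intros [lu Hu] [lv Hv]. eexists.
  apply (filterdiff_comp'_2 u v (fun p q => (p, q) : C2) x lu lv (fun p q => (p, q) : C2) Hu Hv).
  apply (filterdiff_linear (fun t : C2 => (fst t, snd t) : C2)).
  apply is_linear_prod. apply is_linear_fst. apply is_linear_snd.
Qed.

Definition fmap (x : C2) : C2 := (Ci * (1 - snd x) / (1 + snd x), fst x / (1 + snd x)).
Definition gmap (y : C2) : C2 := (2 * Ci * snd y / (Ci + fst y), (Ci - fst y) / (Ci + fst y)).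

Lemma C10 : (1 : C) <> 0.
Proof. intros H. injection H. lra. Qed.

Lemma Cinv_neq0 (z : C) : z <> 0 -> / z <> 0.
Proof. intros H H'. assert (E : z * / z = 1) by (field; auto). rewrite H', Cmult_0_r in E.
  apply C10; auto. Qed.

Lemma CiCi : Ci * Ci = - (1).
Proof. apply injective_projections; simpl; ring. Qed.

Lemma Cmod2 (z : C) : (Cmod z ^ 2 = fst z ^ 2 + snd z ^ 2)%R.
Proof. rewrite Cmod2_alt. reflexivity. Qed.

Lemma Cmod_lt1 (z : C) : (Cmod z < 1)%R <-> (fst z ^ 2 + snd z ^ 2 < 1)%R.
Proof. rewrite <- Cmod2. pose proof (Cmod_ge_0 z). split; intros; nra. Qed.

Lemma K1 (a b : C) : 1 + a * b <> 0 ->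
  (Cmod (1 + fst (fmap ((a + b)%C, (a * b)%C)) * fst (fmap ((a + b)%C, (a * b)%C)) - snd (fmap ((a + b)%C, (a * b)%C)) * snd (fmap ((a + b)%C, (a * b)%C))) * Cmod (1 + a * b) ^ 2
   = Cmod (a - b) ^ 2)%R.
Proof.
  intros HD. unfold fmap; simpl.
  replace (Ci * (1 - a * b) / (1 + a * b) * (Ci * (1 - a * b) / (1 + a * b))) with
     ((Ci * Ci) * ((1 - a * b) * (1 - a * b)) / ((1 + a * b) * (1 + a * b))) by (field; auto).
  rewrite CiCi.
  replace (1 + - (1) * ((1 - a * b) * (1 - a * b)) / ((1 + a * b) * (1 + a * b)) -
     (a + b) / (1 + a * b) * ((a + b) / (1 + a * b))) with (- ((a - b) * (a - b)) / ((1 + a * b) * (1 + a * b))) by (field; auto).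
  rewrite Cmod_div by (apply Cmult_neq_0; auto).
  rewrite Cmod_opp, !Cmod_mult.
  assert (Cmod (1 + a * b) <> 0%R) by (intros H; apply HD; apply Cmod_eq_0; auto).
  field. auto.
Qed.

Lemma K2a (a b : C) : 1 + a * b <> 0 ->
  (Cmod (fst (fmap ((a + b)%C, (a * b)%C))) ^ 2 * Cmod (1 + a * b) ^ 2 = Cmod (1 - a * b) ^ 2)%R.
Proof.
  intros HD. unfold fmap; simpl.
  unfold Cdiv. rewrite !Cmod_mult, Cmod_inv, Cmod_Ci by auto.
  assert (Cmod (1 + a * b) <> 0%R) by (intros H; apply HD; apply Cmod_eq_0; auto).
  field. auto.
Qed.

Lemma K2b (a b : C) : 1 + a * b <> 0 ->
  (Cmod (snd (fmap ((a + b)%C, (a * b)%C))) ^ 2 * Cmod (1 + a * b) ^ 2 = Cmod (a + b) ^ 2)%R.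
Proof.
  intros HD. unfold fmap; simpl.
  unfold Cdiv. rewrite !Cmod_mult, Cmod_inv by auto.
  assert (Cmod (1 + a * b) <> 0%R) by (intros H; apply HD; apply Cmod_eq_0; auto).
  field. auto.
Qed.

Lemma K3 (a1 a2 b1 b2 : R) :
  let a := (a1, a2) : C in let b := (b1, b2) : C in
  let D := 1 + a * b in
  D <> 0 ->
  (Im (fst (fmap ((a + b)%C, (a * b)%C)) * (1 + Cconj (snd (fmap ((a + b)%C, (a * b)%C)))))%C * (fst D ^ 2 + snd D ^ 2) =
   ((1 - (a1^2 + a2^2)) * ((1 + b1)^2 + b2^2) + (1 - (b1^2 + b2^2)) * ((1 + a1)^2 + a2^2)) / 2)%R.
Proof.
  intros a b D HD.
  assert (HD' : (fst D ^ 2 + snd D ^ 2 <> 0)%R).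
  { intros H. apply HD. assert (fst D = 0%R) by nra. assert (snd D = 0%R) by nra.
    destruct D; simpl in *; subst; reflexivity. }
  subst a b D. unfold fmap. simpl in *.
  unfold Cdiv, Cinv, Cmult, Cplus, Cminus, Copp, Cconj, Ci, RtoC, Im in *; simpl in *.
  field. contradict HD'. nra.
Qed.

Section RCs.
Local Open Scope R_scope.
Lemma real_core (X P Q I M A B A' B' Dab Dm Dp : R) :
  (0 < M -> X * M = Dab -> P ^ 2 * M = Dm -> Q ^ 2 * M = Dp ->
  I * M = ((1 - A) * B' + (1 - B) * A') / 2 ->
  M + Dm - Dp - Dab = 2 * (1 - A) * (1 - B) ->
  0 <= A' -> 0 <= B' -> (A < 1 -> 0 < A') -> (B < 1 -> 0 < B') ->
  ((X < 1 + P ^ 2 - Q ^ 2 /\ 0 < I) <-> (A < 1 /\ B < 1)))%R.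
Proof.
  intros HM E1 E2 E3 E4 Hid HA' HB' HA HB.
  assert (Eq1 : (1 + P ^ 2 - Q ^ 2 - X) * M = 2 * (1 - A) * (1 - B)) by (rewrite <- Hid; nra).
  split.
  - intros [H1 H2].
    assert (C1 : 0 < (1 - A) * (1 - B)).
    { assert (0 < (1 + P ^ 2 - Q ^ 2 - X) * M) by (apply Rmult_lt_0_compat; lra). nra. }
    assert (C2 : 0 < ((1 - A) * B' + (1 - B) * A') / 2) by (rewrite <- E4; nra).
    destruct (Rlt_dec A 1) as [Ha|Ha].
    + split; [exact Ha|]. destruct (Rlt_dec B 1) as [Hb|Hb]; [exact Hb|]. exfalso. assert (0 < 1 - A) by lra. assert (1 - B <= 0) by lra. nra.
    + exfalso. assert (HA1 : 1 <= A) by lra.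
      destruct (Rle_lt_or_eq_dec 1 A HA1) as [HA2|HA2].
      * assert (1 - A < 0) by lra.
        assert (HB1 : 1 - B < 0).
        { destruct (Rlt_dec (1 - B) 0); auto. exfalso. assert (0 <= 1 - B) by lra. nra. }
        assert ((1 - A) * B' <= 0) by nra. assert ((1 - B) * A' <= 0) by nra. lra.
      * subst A. lra.
  - intros [Ha Hb].
    split.
    + assert (0 < (1 + P ^ 2 - Q ^ 2 - X) * M) by nra.
      assert (0 < 1 + P ^ 2 - Q ^ 2 - X).
      { destruct (Rlt_dec 0 (1 + P ^ 2 - Q ^ 2 - X)); auto. nra. }
      lra.
    + assert (0 < A') by auto. assert (0 < B') by auto.
      assert (0 < I * M) by (rewrite E4; nra).
      destruct (Rlt_dec 0 I); auto. nra.
Qed.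
End RCs.

Lemma fmap_D1 (a b : C) : 1 + a * b <> 0 ->
  (D1 (fmap ((a + b)%C, (a * b)%C)) <-> (Defs.disc a /\ Defs.disc b)).
Proof.
  intros HD.
  pose proof (K1 a b HD) as E1. pose proof (K2a a b HD) as E2. pose proof (K2b a b HD) as E3.
  rewrite (Cmod2 (1 + a * b)) in E1, E2, E3.
  destruct a as [a1 a2], b as [b1 b2].
  pose proof (K3 a1 a2 b1 b2 HD) as E4.
  unfold D1, Defs.disc. rewrite !Cmod_lt1.
  eapply real_core; [ | exact E1 | exact E2 | exact E3 | exact E4 | | | | | ].
  - set (D := 1 + (a1, a2) * (b1, b2)) in *.
    assert (0 <= fst D ^ 2 + snd D ^ 2)%R by nra.
    destruct (Rle_lt_or_eq_dec _ _ H) as [H'|H']; auto.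
    exfalso. apply HD. destruct D as [d1 d2]; simpl in *. apply injective_projections; simpl; nra.
  - rewrite !Cmod2. simpl. ring.
  - apply Rplus_le_le_0_compat; apply pow2_ge_0.
  - apply Rplus_le_le_0_compat; apply pow2_ge_0.
  - simpl. intros. assert (a1 ^ 2 < 1)%R by (pose proof (pow2_ge_0 a2); lra).
    assert (0 < 1 + a1)%R by nra. pose proof (pow2_ge_0 a2). nra.
  - simpl. intros. assert (b1 ^ 2 < 1)%R by (pose proof (pow2_ge_0 b2); lra).
    assert (0 < 1 + b1)%R by nra. pose proof (pow2_ge_0 b2). nra.
Qed.

Section SQ.
Local Open Scope R_scope.
Lemma Csqrt_ex (c : C) : exists w : C, (w * w)%C = c.
Proof.
  destruct c as [x y].
  set (r := sqrt (x ^ 2 + y ^ 2)).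
  assert (Hr0 : 0 <= r) by apply sqrt_pos.
  assert (Hr2 : r * r = x ^ 2 + y ^ 2) by (apply sqrt_sqrt; nra).
  assert (Hrx : Rabs x <= r).
  { unfold Rabs; destruct (Rcase_abs x); nra. }
  assert (H1 : 0 <= (r + x) / 2) by (pose proof (Rle_abs (-x)); rewrite Rabs_Ropp in *; lra).
  assert (H2 : 0 <= (r - x) / 2) by (pose proof (Rle_abs x); lra).
  set (u := sqrt ((r + x) / 2)). set (v := sqrt ((r - x) / 2)).
  assert (Hu : u * u = (r + x) / 2) by (apply sqrt_sqrt; auto).
  assert (Hv : v * v = (r - x) / 2) by (apply sqrt_sqrt; auto).
  assert (Hu0 : 0 <= u) by apply sqrt_pos. assert (Hv0 : 0 <= v) by apply sqrt_pos.
  assert (Huv2 : (u * v) * (u * v) = (y / 2) * (y / 2)).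
  { replace ((u * v) * (u * v)) with ((u * u) * (v * v)) by ring. rewrite Hu, Hv. nra. }
  assert (Huv : u * v = Rabs y / 2).
  { assert (0 <= u * v) by nra. assert (0 <= Rabs y / 2) by (pose proof (Rabs_pos y); lra).
    assert ((Rabs y / 2) * (Rabs y / 2) = (y / 2) * (y / 2)).
    { replace (Rabs y / 2 * (Rabs y / 2)) with (Rabs y * Rabs y / 4) by field.
      rewrite <- Rabs_mult, Rabs_pos_eq by nra. field. }
    nra. }
  destruct (Rle_dec 0 y) as [Hy|Hy].
  - exists (u, v). apply injective_projections; simpl.
    + lra.
    + rewrite Rabs_pos_eq in Huv by auto. lra.
  - exists (u, - v). apply injective_projections; simpl.
    + lra.
    + rewrite Rabs_left in Huv by lra. lra.
Qed.
End SQ.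

Lemma fd_rat' (x : C2) (a b c d e f : C) (u : C2 -> C) :
  (forall y : C2, u y = (a + b * fst y + c * snd y) / (d + e * fst y + f * snd y)) ->
  d + e * fst x + f * snd x <> 0 ->
  exists l, @filterdiff C_AbsRing C2 C_NormedModule u (locally x) l.
Proof.
  intros Hu Hn. destruct (fd_rat x a b c d e f Hn) as [l Hl]. exists l.
  apply (@filterdiff_ext C_AbsRing C2 C_NormedModule (locally x) _ (fun y : C2 => (a + b * fst y + c * snd y) / (d + e * fst y + f * snd y)) u l); auto.
Qed.

Lemma Ci_neq0 : Ci <> 0.
Proof. intros H. injection H. lra. Qed.

Lemma G_ne (x : C2) : symbidisc x -> 1 + snd x <> 0.
Proof.
  intros [a [b [Ha [Hb ->]]]]. simpl. intros H.
  assert (E : a * b = - (1)) by (replace (a * b) with ((1 + a * b) - 1) by ring; rewrite H; ring).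
  assert (E2 := f_equal Cmod E). rewrite Cmod_mult, Cmod_opp, Cmod_1 in E2.
  unfold Defs.disc in *. pose proof (Cmod_ge_0 a). pose proof (Cmod_ge_0 b). nra.
Qed.

Lemma D1_ne' (z1 z2 : C) : D1 (z1, z2) -> Ci + z1 <> 0.
Proof.
  unfold D1. cbv zeta. cbn [fst snd]. intros [H1 H2] E.
  assert (Ez : z1 = - Ci) by (replace z1 with ((Ci + z1) - Ci) by ring; rewrite E; ring).
  subst z1.
  replace (1 + - Ci * - Ci - z2 * z2) with (- (z2 * z2)) in H1
    by (replace (- Ci * - Ci) with (Ci * Ci) by ring; rewrite CiCi; ring).
  rewrite Cmod_opp, Cmod_mult, Cmod_opp, Cmod_Ci in H1.
  assert (Hm : (Cmod z2 ^ 2 < 1)%R) by nra.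
  rewrite Cmod2 in Hm.
  destruct z2 as [p1 p2]. simpl in Hm.
  unfold Cmult, Cplus, Copp, Cconj, Ci, RtoC, Im in H2; simpl in H2.
  nra.
Qed.

Lemma D1_ne (y : C2) : D1 y -> Ci + fst y <> 0.
Proof. destruct y as [z1 z2]. apply D1_ne'. Qed.


Lemma C2_neq0 : (2 : C) <> 0.
Proof. intros H. injection H. lra. Qed.

Lemma fg' (z1 z2 : C) : Ci + z1 <> 0 -> fmap (gmap (z1, z2)) = (z1, z2).
Proof.
  intros Hn.
  pose proof Ci_neq0 as Hi. pose proof C2_neq0 as H2.
  assert (Hq : 1 + (Ci - z1) / (Ci + z1) <> 0).
  { replace (1 + (Ci - z1) / (Ci + z1)) with (2 * Ci * / (Ci + z1)) by (field; auto).
    apply Cmult_neq_0; [apply Cmult_neq_0; auto|apply Cinv_neq0; auto]. }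
  assert (Hs : Ci + z1 + (Ci - z1) <> 0).
  { replace (Ci + z1 + (Ci - z1)) with (2 * Ci) by ring. apply Cmult_neq_0; auto. }
  unfold fmap, gmap; cbn [fst snd].
  apply injective_projections; cbn [fst snd];
    match goal with |- ?a = ?b => change (@eq C a b) end.
  - field; repeat split; auto.
  - field; repeat split; auto.
Qed.

Lemma gf' (t q : C) : 1 + q <> 0 -> gmap (fmap (t, q)) = (t, q).
Proof.
  intros Hn.
  pose proof Ci_neq0 as Hi. pose proof C2_neq0 as H2.
  assert (Hs : Ci * (1 + q) + Ci * (1 - q) <> 0).
  { replace (Ci * (1 + q) + Ci * (1 - q)) with (2 * Ci) by ring. apply Cmult_neq_0; auto. }
  unfold fmap, gmap; cbn [fst snd].
  apply injective_projections; cbn [fst snd];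
    match goal with |- ?a = ?b => change (@eq C a b) end.
  - field; repeat split; auto.
  - field; repeat split; auto.
Qed.

Lemma C4_neq0 : (4 : C) <> 0.
Proof. intros H. injection H. lra. Qed.

Lemma gmap_in' (z1 z2 : C) : D1 (z1, z2) -> symbidisc (gmap (z1, z2)).
Proof.
  intros Hy. pose proof (D1_ne' z1 z2 Hy) as Hn.
  pose proof Ci_neq0 as Hi. pose proof C2_neq0 as H2. pose proof C4_neq0 as H4.
  set (t := 2 * Ci * z2 / (Ci + z1)). set (q := (Ci - z1) / (Ci + z1)).
  assert (Hq : 1 + q <> 0).
  { unfold q. replace (1 + (Ci - z1) / (Ci + z1)) with (2 * Ci * / (Ci + z1)) by (field; auto).
    apply Cmult_neq_0; [apply Cmult_neq_0; auto|apply Cinv_neq0; auto]. }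
  destruct (Csqrt_ex (t * t - 4 * q)) as [w Hw].
  set (a := (t + w) / 2). set (b := (t - w) / 2).
  assert (Eab1 : a + b = t) by (unfold a, b; field; auto).
  assert (Eab2 : a * b = q).
  { unfold a, b. replace ((t + w) / 2 * ((t - w) / 2)) with ((t * t - w * w) / 4) by (field; auto).
    rewrite Hw. field. }
  assert (Eg : gmap (z1, z2) = (a + b, a * b)) by (rewrite Eab1, Eab2; reflexivity).
  assert (Hf : fmap (a + b, a * b) = (z1, z2)) by (rewrite <- Eg; apply fg'; auto).
  assert (HD : 1 + a * b <> 0) by (rewrite Eab2; auto).
  pose proof (proj1 (fmap_D1 a b HD)) as Hd. rewrite Hf in Hd.
  destruct (Hd Hy) as [Ha Hb].
  exists a, b. split; [exact Ha|]. split; [exact Hb|]. exact Eg.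
Qed.

Lemma gmap_in (y : C2) : D1 y -> symbidisc (gmap y).
Proof. destruct y as [z1 z2]. apply gmap_in'. Qed.

Lemma fmap_in (x : C2) : symbidisc x -> D1 (fmap x).
Proof.
  intros Hx. pose proof (G_ne x Hx) as Hn.
  destruct Hx as [a [b [Ha [Hb E]]]]. rewrite E in *. simpl in Hn.
  apply (proj2 (fmap_D1 a b Hn)). split; auto.
Qed.

Lemma gf (x : C2) : symbidisc x -> gmap (fmap x) = x.
Proof.
  intros Hx. pose proof (G_ne x Hx) as Hn. destruct x as [t q]. apply gf'. exact Hn.
Qed.

Lemma fg (y : C2) : D1 y -> fmap (gmap y) = y.
Proof.
  intros Hy. pose proof (D1_ne y Hy) as Hn. destruct y as [z1 z2]. apply fg'. exact Hn.
Qed.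

Lemma div_eq (a a' b b' : C) : a = a' -> b = b' -> a / b = a' / b'.
Proof. intros -> ->; reflexivity. Qed.

Lemma ne_eq (a b : C) : a = b -> b <> 0 -> a <> 0.
Proof. intros ->; auto. Qed.

Theorem theorem3p2 : biholomorphic symbidisc D1.
Proof.
  exists fmap, gmap.
  split; [|split; [|split; [|split; [|split]]]].
  - intros x Hx. pose proof (G_ne x Hx) as Hn.
    apply (fd_pair x (fun y => Ci * (1 - snd y) / (1 + snd y)) (fun y => fst y / (1 + snd y))).
    + apply (fd_rat' x Ci 0 (- Ci) 1 0 1); [intros y; change (NormedModule.sort C_AbsRing C_NormedModule) with C in *; apply div_eq; ring | ].
      apply (ne_eq _ (1 + snd x)); [change (NormedModule.sort C_AbsRing C_NormedModule) with C in *; ring | exact Hn].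
    + apply (fd_rat' x 0 1 0 1 0 1); [intros y; change (NormedModule.sort C_AbsRing C_NormedModule) with C in *; apply div_eq; ring | ].
      apply (ne_eq _ (1 + snd x)); [change (NormedModule.sort C_AbsRing C_NormedModule) with C in *; ring | exact Hn].
  - intros y Hy. pose proof (D1_ne y Hy) as Hn.
    apply (fd_pair y (fun y => 2 * Ci * snd y / (Ci + fst y)) (fun y => (Ci - fst y) / (Ci + fst y))).
    + apply (fd_rat' y 0 0 (2 * Ci) Ci 1 0); [intros z; change (NormedModule.sort C_AbsRing C_NormedModule) with C in *; apply div_eq; ring | ].
      apply (ne_eq _ (Ci + fst y)); [change (NormedModule.sort C_AbsRing C_NormedModule) with C in *; ring | exact Hn].
    + apply (fd_rat' y Ci (- (1)) 0 Ci 1 0); [intros z; change (NormedModule.sort C_AbsRing C_NormedModule) with C in *; apply div_eq; ring | ].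
      apply (ne_eq _ (Ci + fst y)); [change (NormedModule.sort C_AbsRing C_NormedModule) with C in *; ring | exact Hn].
  - exact fmap_in.
  - exact gmap_in.
  - exact gf.
  - exact fg.
Qed.
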